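(* Let $X\subseteq\mathbb{R}^N$ be a closed convex set, $D\in\mathbb{R}^K$, $V$ a random $K\times N$ matrix, and $S(p):=\{x\in X:\mathbb{P}(Vx\le D)\ge p\}$. If $p\in(0,1]$ and $0\in S(p)$, then $S(p)$ is star-shaped with respect to the origin, i.e. $S(p)\ne\emptyset$ and $\{\lambda x:\lambda\in[0,1]\}\subseteq S(p)$ for every $x\in S(p)$.
   Context: The inequality $Vx\le D$ is componentwise. *)

(* Defs.v *)
From HB Require Import structures.
From mathcomp Require Import all_boot all_order all_algebra.
From mathcomp Require Import all_classical all_reals all_analysis.
Set Implicit Arguments. Unset Strict Implicit. Unset Printing Implicit Defensive.
Import Order.TTheory GRing.Theory Num.Theory.
Import numFieldNormedType.Exports.
Local Open Scope classical_set_scope.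
Local Open Scope ring_scope.

(* Vectors of R^N are column vectors 'cV[R]_N; V is a random K x N matrix,
   i.e. a map Omega -> 'M[R]_(K,N) with measurable entries. *)

Definition feas_event (R : realType) (Omega : Type) (K N : nat)
  (V : Omega -> 'M[R]_(K, N)) (D : 'cV[R]_K) (x : 'cV[R]_N) : set Omega :=
  [set w | forall i : 'I_K, (V w *m x) i ord0 <= D i ord0].

Definition Sp (R : realType) (d : measure_display) (Omega : measurableType d)
  (P : probability Omega R) (K N : nat) (X : set 'cV[R]_N)
  (V : Omega -> 'M[R]_(K, N)) (D : 'cV[R]_K) (p : R) : set 'cV[R]_N :=
  [set x | X x /\ (p%:E <= P (feas_event V D x))%E].

(* Main.v *)
Require Import Defs.
From HB Require Import structures.
From mathcomp Require Import all_boot all_order all_algebra.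
From mathcomp Require Import all_classical all_reals all_analysis.
Import Order.TTheory GRing.Theory Num.Theory.
Import numFieldNormedType.Exports.
Local Open Scope classical_set_scope.
Local Open Scope ring_scope.

Lemma feas_meas (R : realType) (d : measure_display) (Omega : measurableType d)
  (K N : nat) (V : Omega -> 'M[R]_(K, N)) (D : 'cV[R]_K)
  (hV : forall (i : 'I_K) (j : 'I_N), measurable_fun setT (fun w => V w i j))
  (y : 'cV[R]_N) : measurable (feas_event V D y).
Proof.
have -> : feas_event V D y =
  \bigcap_(i in [set: 'I_K]) [set w | (V w *m y) i ord0 <= D i ord0].
  by apply/seteqP; split=> w /= H i; [move=> _|]; apply: H.
apply: fin_bigcap_measurable; first exact: finite_finset.
move=> i _.
have mf : measurable_fun setT (fun w => (V w *m y) i ord0).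
  under eq_fun do rewrite mxE.
  apply: measurable_sum => j.
  exact: (measurableT_comp (measurable_realfun.mulrr_measurable _) (hV i j)).
have := mf measurableT `]-oo, D i ord0]%classic (measurable_itv _).
rewrite setTI; congr measurable; apply/seteqP; split=> w /=;
  by rewrite in_itv /=.
Qed.

Theorem lemma2p14 (R : realType) (d : measure_display) (Omega : measurableType d)
  (P : probability Omega R) (K N : nat) (X : set 'cV[R]_N)
  (V : Omega -> 'M[R]_(K, N)) (D : 'cV[R]_K) (p : R)
  (hXclosed : closed X) (hXconvex : convex_set X)
  (hV : forall (i : 'I_K) (j : 'I_N), measurable_fun setT (fun w => V w i j))
  (hp : 0 < p <= 1) (h0 : Sp P X V D p 0) :
  Sp P X V D p !=set0 /\
  (forall x, Sp P X V D p x ->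
     forall lambda : R, 0 <= lambda <= 1 -> Sp P X V D p (lambda *: x)).
Proof.
split; first by exists 0.
case: h0 => X0 P0.
have [w0 Hw0] : feas_event V D 0 !=set0.
  apply/set0P/negP => /eqP E; move: P0; rewrite E measure0 lee_fin.
  by case/andP: hp => hp _; rewrite leNgt hp.
have Dge0 : forall i, 0 <= D i ord0.
  by move=> i; have := Hw0 i; rewrite mulmx0 mxE.
move=> x [Xx Px] l /andP[l0 l1]; split.
  have := hXconvex x 0 (Itv01 l0 l1) (mem_set Xx) (mem_set X0).
  rewrite inE; congr X.
  by rewrite /conv /= scaler0 addr0.
apply: (le_trans Px); apply: le_measure; rewrite ?inE; try exact: feas_meas.
move=> w Hw i; rewrite -scalemxAr mxE.
apply: le_trans (_ : l * D i ord0 <= _).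
  by apply: ler_wpM2l => //; apply: Hw.
by rewrite -[leRHS]mul1r ler_wpM2r.
Qed.
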